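(* Let $(G,u)$ be a simple dimension group with order unit $u$. Then $\mathbb Q(G,u)=\mathbb Z u$ if and only if there is no $x\in G$ and integer $n$ with $|n|\ge2$ such that $nx=u$.
   Context: A dimension group is an unperforated partially ordered abelian group with the Riesz interpolation property; simple means no nontrivial order ideals. The rational subgroup is $\mathbb Q(G,u)=\{g\in G: pg=mu\text{ for some nonzero } p\in\mathbb Z,\ m\in\mathbb Z\}$. *)

(* Defs.v *)
From mathcomp Require Import all_boot all_order all_algebra.
Set Implicit Arguments. Unset Strict Implicit. Unset Printing Implicit Defensive.
Import Order.TTheory GRing.Theory Num.Theory.
Local Open Scope ring_scope.

Definition pogroup (G : zmodType) (le : G -> G -> Prop) : Prop :=
  [/\ (forall x, le x x),
      (forall x y, le x y -> le y x -> x = y),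
      (forall x y z, le x y -> le y z -> le x z) &
      (forall x y z, le x y -> le (x + z) (y + z))].

Definition directed (G : zmodType) (le : G -> G -> Prop) : Prop :=
  forall x : G, exists a b, [/\ le 0 a, le 0 b & x = a - b].

Definition unperforated (G : zmodType) (le : G -> G -> Prop) : Prop :=
  forall (n : nat) (x : G), (0 < n)%N -> le 0 (x *+ n) -> le 0 x.

Definition riesz_interpolation (G : zmodType) (le : G -> G -> Prop) : Prop :=
  forall a1 a2 b1 b2 : G, le a1 b1 -> le a1 b2 -> le a2 b1 -> le a2 b2 ->
    exists c, [/\ le a1 c, le a2 c, le c b1 & le c b2].

Definition dimension_group (G : zmodType) (le : G -> G -> Prop) : Prop :=
  [/\ pogroup le, directed le, unperforated le & riesz_interpolation le].

Definition order_ideal (G : zmodType) (le : G -> G -> Prop) (I : G -> Prop) : Prop :=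
  [/\ I 0,
      (forall x y, I x -> I y -> I (x - y)),
      (forall x y, le 0 x -> le x y -> I y -> I x) &
      (forall x, I x -> exists a b, [/\ I a, I b, le 0 a, le 0 b & x = a - b])].

Definition simple_pog (G : zmodType) (le : G -> G -> Prop) : Prop :=
  (exists x : G, x <> 0) /\
  forall I : G -> Prop, order_ideal le I ->
    (forall x, I x -> x = 0) \/ (forall x, I x).

Definition order_unit (G : zmodType) (le : G -> G -> Prop) (u : G) : Prop :=
  le 0 u /\ forall x : G, exists n : nat, le x (u *+ n).

Definition rational_subgroup (G : zmodType) (u : G) : G -> Prop :=
  fun g => exists p m : int, p != 0 /\ g *~ p = u *~ m.

(* Main.v *)
Require Import Defs.
From mathcomp Require Import all_boot all_order all_algebra.
From mathcomp Require Import zify ring.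
Import Order.TTheory GRing.Theory Num.Theory.
Local Open Scope ring_scope.

Lemma tf (G : zmodType) (le : G -> G -> Prop) (y : G) (k : int) :
  dimension_group le -> k != 0 -> y *~ k = 0 -> y = 0.
Proof.
case=> [[lr la lt li] _ up _] k0 hk.
have H: forall n : nat, (0 < n)%N -> y *+ n = 0 -> y = 0.
  move=> n n0 hn.
  have h1 : le 0 y by apply: (up n) => //; rewrite hn; apply: lr.
  have h2 : le 0 (- y) by apply: (up n) => //; rewrite mulNrn hn oppr0; apply: lr.
  apply: la => //.
  by have := li _ _ y h2; rewrite addNr add0r.
case: k k0 hk => n.
  by move=> n0 hn; apply: (H n) => //; rewrite lt0n; apply: contraNneq n0 => ->.
rewrite NegzE mulrNz => _ /eqP; rewrite oppr_eq0 => /eqP; exact: H.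
Qed.

Lemma ab1 (a b : int) : 2 <= b -> 0 <= a -> a*b = 1 -> False.
Proof. move=> h1 h2 h3. have [a0|a1] : a = 0 \/ 1 <= a by lia.
rewrite a0 mul0r in h3; lia. nia. Qed.

Lemma mn1 (m n : int) : 2 <= `|n| -> m * n - 1 != 0.
Proof. move=> h; apply/eqP => e. have : m * n = 1 by lia.
move/(congr1 Num.norm); rewrite normrM normr1. apply: ab1 => //. Qed.

Lemma pm1 (p : int) : ~ (2 <= `|p|) -> p != 0 -> p = 1 \/ p = -1.
Proof. move=> h /eqP h2. lia. Qed.

Theorem mainTheorem17 (G : zmodType) (le : G -> G -> Prop) (u : G) :
  dimension_group le -> simple_pog le -> order_unit le u ->
  ((forall g : G, rational_subgroup u g <-> exists m : int, g = u *~ m) <->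
   ~ (exists (x : G) (n : int), 2 <= `|n| /\ x *~ n = u)).
Proof.
move=> dg [[y y0] _] [_ ou]; split.
- move=> H [x [n [hn hx]]].
  have n0 : n != 0 by apply/eqP => n0; move: hn; rewrite n0 normr0.
  have [m xm] : exists m : int, x = u *~ m.
    apply/H; exists n, 1; split => //; by rewrite hx mulr1z.
  have u0 : u = 0.
    apply: (@tf _ le u _ dg (mn1 m n hn)).
    by rewrite mulrzBr mulrzA -xm hx mulr1z subrr.
  apply: y0; case: dg => [[lr la lt li] _ _ _].
  have le0 : forall z, le z 0.
    by move=> z; have [k hk] := ou z; move: hk; rewrite u0 mul0rn.
  apply: la => //.
  by have := li _ _ y (le0 (- y)); rewrite addNr add0r.
- move=> N g; split; last first.
    by move=> [m ->]; exists 1, m; split => //; rewrite mulr1z.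
  move=> [p [m [p0 hpm]]].
  have [a [b hab]] := Bezoutz p m.
  set d := gcdz p m in hab.
  have d0 : d != 0 by rewrite gcdz_eq0 negb_and p0.
  set p' := (p %/ d)%Z; set m' := (m %/ d)%Z.
  have ep : p = p' * d by rewrite divzK // dvdz_gcdl.
  have em : m = m' * d by rewrite divzK // dvdz_gcdr.
  have hpm' : g *~ p' = u *~ m'.
    apply/eqP; rewrite -subr_eq0; apply/eqP.
    apply: (@tf _ le _ _ dg d0).
    by rewrite mulrzBl -!mulrzA -ep -em hpm subrr.
  have e1 : a * p' + b * m' = 1.
    apply: (mulIf d0); by rewrite mul1r mulrDl -!mulrA -ep -em.
  have hx : (g *~ b + u *~ a) *~ p' = u.
    rewrite mulrzDl -!mulrzA [b * p']mulrC (mulrzA g) hpm' -mulrzA -mulrzDr.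
    have -> : m' * b + a * p' = 1 by rewrite -e1 addrC [m' * b]mulrC.

    by rewrite mulr1z.
  have p'0 : p' != 0 by apply/eqP => h; move: p0; rewrite ep h mul0r eqxx.
  have np : ~ (2 <= `|p'|) by move=> h; apply: N; exists (g *~ b + u *~ a), p'.
  exists (m' * p').
  case: (pm1 _ np p'0) => e; rewrite e in hpm' *.
    by move: hpm'; rewrite mulr1z => ->; rewrite mulr1.
  by move: hpm'; rewrite mulrN1z => /(congr1 -%R); rewrite opprK => ->; rewrite mulrN1 mulrNz.
Qed.
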